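(* Let $n\ge 1$, $\mathbf a\in\mathbb{R}^n$, and write $P=P(\mathbf a)$, $N=N(\mathbf a)$, $Z=Z(\mathbf a)$. Then $$P(J_{n,1}\mathbf a)\ge \frac{P(P+1)}{2}+PZ,\quad N(J_{n,1}\mathbf a)\ge \frac{N(N+1)}{2}+NZ,\quad Z(J_{n,1}\mathbf a)\le \frac{Z(Z+1)}{2}+PN,$$ and all three are equalities when $PN=0$.
   Context: For $\mathbf x\in\mathbb{R}^m$, $P(\mathbf x)$, $N(\mathbf x)$, $Z(\mathbf x)$ denote the numbers of positive, negative and zero components of $\mathbf x$. $J_{n,1}$ is the matrix, with respect to the left lexicographic monomial bases $(x_1,\dots,x_n)$ of degree 1 and $(x_1^2,x_1x_2,\dots,x_n^2)$ of degree 2, of the map $A(x)\mapsto A(x)(x_1+\cdots+x_n)$; thus $J_{n,1}\mathbf a$ is the coefficient vector of $(a_1x_1+\cdots+a_nx_n)(x_1+\cdots+x_n)$. *)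

(* Defs.v *)
From HB Require Import structures.
From mathcomp Require Import all_boot all_order all_algebra.
Set Implicit Arguments. Unset Strict Implicit. Unset Printing Implicit Defensive.
Import Order.TTheory GRing.Theory Num.Theory.
Local Open Scope ring_scope.

Definition Pc (R : realFieldType) (m : nat) (x : 'rV[R]_m) : nat :=
  #|[set i : 'I_m | 0 < x ord0 i]|.
Definition Nc (R : realFieldType) (m : nat) (x : 'rV[R]_m) : nat :=
  #|[set i : 'I_m | x ord0 i < 0]|.
Definition Zc (R : realFieldType) (m : nat) (x : 'rV[R]_m) : nat :=
  #|[set i : 'I_m | x ord0 i == 0]|.

(* Degree-2 monomials x_i x_j in n variables, encoded as pairs (i,j), i <= j.
   The finType enumeration of a subtype of 'I_n * 'I_n is lexicographic,
   i.e. the left lexicographic order x_1^2, x_1x_2, ..., x_n^2. *)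
Definition mono2 (n : nat) := {p : 'I_n * 'I_n | (p.1 <= p.2)%N}.

(* Coefficient of x_i x_j (i <= j) in (a_1x_1+...+a_nx_n)(x_1+...+x_n):
   a_i if i = j, a_i + a_j if i < j. *)
Definition coef2 (R : realFieldType) (n : nat) (a : 'rV[R]_n) (p : 'I_n * 'I_n) : R :=
  if p.1 == p.2 then a ord0 p.1 else a ord0 p.1 + a ord0 p.2.

Definition J1 (R : realFieldType) (n : nat) (a : 'rV[R]_n) : 'rV[R]_(#|{: mono2 n}|) :=
  \row_(k < #|{: mono2 n}|) coef2 a (val (enum_val k)).

(* Main.v *)
Require Import Defs.
From HB Require Import structures.
From mathcomp Require Import all_boot all_order all_algebra.
From mathcomp Require Import zify ring lra.
Import Order.TTheory GRing.Theory Num.Theory.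

Lemma card_sum (T : finType) (Q : pred T) :
  #|[set x | Q x]| = \sum_(x : T) (Q x : nat).
Proof.
rewrite -sum1_card big_mkcond /=; apply: eq_bigr => x _; rewrite inE; by case: (Q x).
Qed.

Lemma J1_card (R : realFieldType) (n : nat) (a : 'rV[R]_n) (Q : pred R) :
  #|[set k | Q (J1 a ord0 k)]| = \sum_(p : mono2 n) (Q (coef2 a (val p)) : nat).
Proof.
rewrite card_sum. under eq_bigr do rewrite mxE.
by rewrite (big_enum_val (fun p : mono2 n => (Q (coef2 a (val p)) : nat))).
Qed.

Lemma mono2_sum (n : nat) (G : 'I_n * 'I_n -> nat) :
  \sum_(p : mono2 n) G (val p) = \sum_(i < n) \sum_(j < n) (((i <= j)%N : nat) * G (i, j)).
Proof.
rewrite pair_big /=.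
rewrite (eq_bigr (fun q : 'I_n * 'I_n => if (q.1 <= q.2)%N then G q else 0)); last first.
  by move=> [i j] _ /=; case: (i <= j)%N; rewrite ?mul1n ?mul0n.
rewrite -big_mkcond /=.
rewrite [RHS](reindex_omap (val : mono2 n -> _) insub); last by move=> q Pq; rewrite insubT.
apply: eq_bigl => -[q Pq] /=; rewrite insubT ?Pq /=.
by apply/esym/eqP; congr Some; apply: val_inj.
Qed.

Lemma twoX (n : nat) (G : 'I_n * 'I_n -> nat) :
  (forall i j, G (i, j) = G (j, i)) ->
  (2 * \sum_(p : mono2 n) G (val p) =
   \sum_(i < n) \sum_(j < n) G (i, j) + \sum_(i < n) G (i, i))%N.
Proof.
move=> Gs; rewrite mono2_sum mul2n -addnn.
have -> : (\sum_(i < n) G (i, i) = \sum_(i < n) \sum_(j < n) ((i == j) : nat) * G (i, j))%N.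
  apply: eq_bigr => i _; rewrite (bigD1 i) //= eqxx mul1n big1 ?addn0 //.
  by move=> j /negbTE; rewrite eq_sym => ->; rewrite mul0n.
have E : (\sum_(i < n) \sum_(j < n) ((i <= j)%N : nat) * G (i, j) =
          \sum_(i < n) \sum_(j < n) ((j <= i)%N : nat) * G (i, j))%N.
  rewrite exchange_big /=; apply: eq_bigr => i _; apply: eq_bigr => j _.
  by rewrite Gs.
rewrite {2}E -!big_split /=; apply: eq_bigr => i _; rewrite -!big_split /=.
apply: eq_bigr => j _.
case: (eqVneq i j) => [->|ne]; first by rewrite leqnn !mul1n.
case: (ltngtP i j) => h; rewrite /= ?mul0n ?mul1n ?addn0 //.
by move/eqP: ne; case; apply: val_inj.
Qed.

Lemma sumprod (n : nat) (f g : 'I_n -> nat) :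
  (\sum_(i < n) \sum_(j < n) f i * g j = (\sum_(i < n) f i) * (\sum_(j < n) g j))%N.
Proof. by rewrite big_distrl /=; apply: eq_bigr => i _; rewrite big_distrr. Qed.

Lemma sum_le2 (n : nat) (f g : 'I_n -> 'I_n -> nat) :
  (forall i j, f i j <= g i j)%N ->
  (\sum_(i < n) \sum_(j < n) f i j <= \sum_(i < n) \sum_(j < n) g i j)%N.
Proof. by move=> h; apply: leq_sum => i _; apply: leq_sum => j _; apply: h. Qed.

Section Pt.
Variable R : realFieldType.
Local Open Scope ring_scope.
Definition sI (t : R) : nat := (0 < t)%R.
Definition nI (t : R) : nat := (t < 0)%R.
Definition zI (t : R) : nat := (t == 0%R).

Lemma pointwise (x y v : R) : (v = x + y \/ (x = y /\ v = x)) ->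
  [/\ (sI x * sI y + sI x * zI y + zI x * sI y <= sI v)%N,
      (sI v <= sI x * sI y + sI x * zI y + zI x * sI y + sI x * nI y + nI x * sI y)%N,
      (nI x * nI y + nI x * zI y + zI x * nI y <= nI v)%N,
      (nI v <= nI x * nI y + nI x * zI y + zI x * nI y + sI x * nI y + nI x * sI y)%N &
      (zI x * zI y <= zI v)%N /\
      (zI v <= zI x * zI y + sI x * nI y + nI x * sI y)%N].
Proof.
rewrite /sI /nI /zI.
case=> [->|[-> ->]].
- case: (ltrgtP x 0) => hx; case: (ltrgtP y 0) => hy;
  case: (ltrgtP (x + y) 0) => hv; try by [];
  exfalso; try lra; rewrite ?hx ?hy in hv; lra.
- by case: (ltrgtP y 0).
Qed.
End Pt.
Arguments sI {R}. Arguments nI {R}. Arguments zI {R}.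

Section Exp.
Variable n : nat.
Implicit Types f g h k l m p q r s : 'I_n -> nat.
Lemma expand3 f g h k l m :
  (\sum_(i < n) \sum_(j < n) (f i * g j + h i * k j + l i * m j) =
   (\sum_(i < n) f i) * (\sum_(i < n) g i) + (\sum_(i < n) h i) * (\sum_(i < n) k i)
   + (\sum_(i < n) l i) * (\sum_(i < n) m i))%N.
Proof. by under eq_bigr do rewrite !big_split; rewrite !big_split /= !sumprod. Qed.
Lemma expand5 f g h k l m p q r s :
  (\sum_(i < n) \sum_(j < n) (f i * g j + h i * k j + l i * m j + p i * q j + r i * s j) =
   (\sum_(i < n) f i) * (\sum_(i < n) g i) + (\sum_(i < n) h i) * (\sum_(i < n) k i)
   + (\sum_(i < n) l i) * (\sum_(i < n) m i) + (\sum_(i < n) p i) * (\sum_(i < n) q i)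
   + (\sum_(i < n) r i) * (\sum_(i < n) s i))%N.
Proof. by under eq_bigr do rewrite !big_split; rewrite !big_split /= !sumprod. Qed.
End Exp.

Lemma half_tri (P : nat) : (P * (P + 1) %/ 2 * 2 = P * (P + 1))%N.
Proof.
rewrite divnK // dvdn2 oddM addn1 /=; by case: (odd P).
Qed.

Theorem lemma3p1 (R : realFieldType) (n : nat) (a : 'rV[R]_n) :
  (0 < n)%N ->
  let P := Pc a in let N := Nc a in let Z := Zc a in
  [/\ (P * (P + 1) %/ 2 + P * Z <= Pc (J1 a))%N,
      (N * (N + 1) %/ 2 + N * Z <= Nc (J1 a))%N,
      (Zc (J1 a) <= Z * (Z + 1) %/ 2 + P * N)%N &
      (P * N = 0)%N ->
        [/\ Pc (J1 a) = (P * (P + 1) %/ 2 + P * Z)%N,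
            Nc (J1 a) = (N * (N + 1) %/ 2 + N * Z)%N &
            Zc (J1 a) = (Z * (Z + 1) %/ 2 + P * N)%N]].
Proof.
move=> _ P N Z.
pose G (Q : pred R) (q : 'I_n * 'I_n) := (Q (coef2 a q) : nat).
have Gs : forall Q i j, G Q (i, j) = G Q (j, i).
  move=> Q i j; rewrite /G /coef2 /= eq_sym.
  by case: eqP => [->|_] //; rewrite addrC.
have Xe : forall Q : pred R, (2 * #|[set k | Q (J1 a ord0 k)]| =
     \sum_(i < n) \sum_(j < n) G Q (i, j) + \sum_(i < n) (Q (a ord0 i) : nat))%N.
  move=> Q; rewrite J1_card; have := @twoX n (G Q) (Gs Q); rewrite /G /= => ->.
  by congr (_ + _); apply: eq_bigr => i _; rewrite /coef2 /= eqxx.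
have hP : P = \sum_(i < n) sI (a ord0 i) by rewrite /P /Pc card_sum.
have hN : N = \sum_(i < n) nI (a ord0 i) by rewrite /N /Nc card_sum.
have hZ : Z = \sum_(i < n) zI (a ord0 i) by rewrite /Z /Zc card_sum.
have pw : forall i j, let x := a ord0 i in let y := a ord0 j in let v := coef2 a (i, j) in
  [/\ (sI x * sI y + sI x * zI y + zI x * sI y <= sI v)%N,
      (sI v <= sI x * sI y + sI x * zI y + zI x * sI y + sI x * nI y + nI x * sI y)%N,
      (nI x * nI y + nI x * zI y + zI x * nI y <= nI v)%N,
      (nI v <= nI x * nI y + nI x * zI y + zI x * nI y + sI x * nI y + nI x * sI y)%N &
      (zI x * zI y <= zI v)%N /\
      (zI v <= zI x * zI y + sI x * nI y + nI x * sI y)%N].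
  move=> i j x y v; apply: pointwise; rewrite /v /x /y /coef2 /=.
  by case: eqP => [->|_]; [right | left].
have X1 := Xe (fun r => 0 < r)%R.
have X2 := Xe (fun r => r < 0)%R.
have X3 := Xe (fun r => r == 0)%R.
rewrite -/(Pc (J1 a)) in X1. rewrite -/(Nc (J1 a)) in X2. rewrite -/(Zc (J1 a)) in X3.
have tP1 : (P*P + P*Z + Z*P <= \sum_(i < n) \sum_(j < n) G (fun r => 0 < r)%R (i, j))%N.
  rewrite hP hZ -expand3; apply: sum_le2 => i j; by case: (pw i j).
have tP2 : (\sum_(i < n) \sum_(j < n) G (fun r => 0 < r)%R (i, j) <= P*P + P*Z + Z*P + P*N + N*P)%N.
  rewrite hP hZ hN -expand5; apply: sum_le2 => i j; by case: (pw i j).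
have tN1 : (N*N + N*Z + Z*N <= \sum_(i < n) \sum_(j < n) G (fun r => r < 0)%R (i, j))%N.
  rewrite hN hZ -expand3; apply: sum_le2 => i j; by case: (pw i j).
have tN2 : (\sum_(i < n) \sum_(j < n) G (fun r => r < 0)%R (i, j) <= N*N + N*Z + Z*N + P*N + N*P)%N.
  rewrite hP hZ hN -expand5; apply: sum_le2 => i j; by case: (pw i j).
have tZ1 : (Z*Z <= \sum_(i < n) \sum_(j < n) G (fun r => r == 0)%R (i, j))%N.
  rewrite hZ -sumprod; apply: sum_le2 => i j; by case: (pw i j) => _ _ _ _ [].
have tZ2 : (\sum_(i < n) \sum_(j < n) G (fun r => r == 0)%R (i, j) <= Z*Z + P*N + N*P)%N.
  rewrite hP hZ hN -expand3; apply: sum_le2 => i j; by case: (pw i j) => _ _ _ _ [].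
rewrite -hP in X1; rewrite -hN in X2; rewrite -hZ in X3.
move: X1 X2 X3 tP1 tP2 tN1 tN2 tZ1 tZ2.
move: (\sum_(i < n) \sum_(j < n) _) => TP.
move: (\sum_(i < n) \sum_(j < n) _) => TN.
move: (\sum_(i < n) \sum_(j < n) _) => TZ.
move: (half_tri P) (half_tri N) (half_tri Z).
move: (Pc (J1 a)) (Nc (J1 a)) (Zc (J1 a)) ((P * (P + 1)) %/ 2) ((N * (N + 1)) %/ 2) ((Z * (Z + 1)) %/ 2) => X Y W kp kn kz.
clearbody P N Z; clear.
move=> *; split; [nia|nia|nia|move=> h0; split; nia].
Qed.
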